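(* Let $B\in\mathbb{R}^{k\times k}$ have an SVD $B=U\,\mathrm{diag}(\sigma_1,\dots,\sigma_k)V'$ with $\sigma_1>\sigma_2>\dots>\sigma_k>0$, and let $\tilde B=B+\Delta_B$. Let $\alpha_B=\min_{i\neq j}|\sigma_i-\sigma_j|$. If there exists $\epsilon>0$ with $$\|\Delta_B\|_F<\epsilon\le\frac{\alpha_B^2}{\sqrt{2}\Big(2\|B\|_F\big(1+\sqrt{1-\tfrac1k}\big)+\sqrt{\alpha_B^2+4\|B\|_F^2\big(1+\sqrt{1-\tfrac1k}\big)^2}\Big)},$$ then $\tilde B$ has an SVD $\tilde B=\tilde U\,\mathrm{diag}(\tilde\sigma_1,\dots,\tilde\sigma_k)\tilde V'$ with $\tilde\sigma_1\ge\dots\ge\tilde\sigma_k$ such that $\|U-\tilde U\|_F\le 2\sqrt{2}\,\dfrac{\epsilon}{\alpha_B}$. *)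

(* Defs.v *)
From HB Require Import structures.
From mathcomp Require Import all_boot all_order all_algebra.
Set Implicit Arguments. Unset Strict Implicit. Unset Printing Implicit Defensive.
Import Order.TTheory GRing.Theory Num.Theory.
Local Open Scope ring_scope.

Definition frob (R : rcfType) (m n : nat) (A : 'M[R]_(m, n)) : R :=
  Num.sqrt (\sum_(i < m) \sum_(j < n) A i j ^+ 2).

Definition orthogonal_mx (R : rcfType) (n : nat) (U : 'M[R]_n) : Prop :=
  U^T *m U = 1%:M.

Definition is_svd (R : rcfType) (n : nat) (B U : 'M[R]_n) (s : 'rV[R]_n)
  (V : 'M[R]_n) : Prop :=
  [/\ orthogonal_mx U, orthogonal_mx V, (forall i, 0 <= s 0 i)
    & B = U *m diag_mx s *m V^T].

(* The neutral element of the
   iterated min is the maximum of all |s_i - s_j|, which dominates every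
   term, so for n >= 2 this is exactly the minimum over i <> j. *)
Definition gap_max (R : rcfType) (n : nat) (s : 'rV[R]_n) : R :=
  \big[Num.max/0]_(i < n) \big[Num.max/0]_(j < n) `|s 0 i - s 0 j|.

Definition alpha (R : rcfType) (n : nat) (s : 'rV[R]_n) : R :=
  \big[Num.min/gap_max s]_(i < n) \big[Num.min/gap_max s]_(j < n | i != j)
     `|s 0 i - s 0 j|.

(* Main.v *)
Require Import Defs.
From HB Require Import structures.
From mathcomp Require Import all_boot all_order all_algebra.
From mathcomp Require Import complex.
From mathcomp Require Import ring lra.
Set Implicit Arguments. Unset Strict Implicit. Unset Printing Implicit Defensive.
Import Order.TTheory GRing.Theory Num.Theory.
Local Open Scope ring_scope.

Section Fsq.
Variable R : rcfType.

Definition fsq m n (X : 'M[R]_(m, n)) : R := \sum_(i < m) \sum_(j < n) X i j ^+ 2.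

Lemma fsq_ge0 m n (X : 'M[R]_(m, n)) : 0 <= fsq X.
Proof. by apply: sumr_ge0 => i _; apply: sumr_ge0 => j _; exact: sqr_ge0. Qed.

Lemma frobE n (X : 'M[R]_n) : frob X = Num.sqrt (fsq X).
Proof. by []. Qed.

Lemma fsq_trmx m n (X : 'M[R]_(m, n)) : fsq X^T = fsq X.
Proof. by rewrite /fsq exchange_big; apply: eq_bigr => i _; apply: eq_bigr => j _; rewrite mxE. Qed.

Lemma fsq_diag m n (X : 'M[R]_(m, n)) : fsq X = \sum_(j < n) (X^T *m X) j j.
Proof.
rewrite /fsq exchange_big; apply: eq_bigr => j _; rewrite mxE.
by apply: eq_bigr => i _; rewrite mxE expr2.
Qed.

Lemma fsq_mulL m n (U : 'M[R]_m) (X : 'M[R]_(m, n)) :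
  U^T *m U = 1%:M -> fsq (U *m X) = fsq X.
Proof.
move=> hU; rewrite !fsq_diag trmx_mul mulmxA -(mulmxA X^T) hU mulmx1 //.
Qed.

Lemma fsq_mulR m n (X : 'M[R]_(m, n)) (Y : 'M[R]_n) :
  Y *m Y^T = 1%:M -> fsq (X *m Y) = fsq X.
Proof.
move=> hY; rewrite -fsq_trmx trmx_mul fsq_mulL ?fsq_trmx // trmxK //.
Qed.

Definition rsq m n (X : 'M[R]_(m, n)) i := \sum_(j < n) X i j ^+ 2.

Lemma rsqE m n (X : 'M[R]_(m, n)) i : rsq X i = (X *m X^T) i i.
Proof. by rewrite mxE; apply: eq_bigr => j _; rewrite mxE expr2. Qed.

Lemma rsq_mulR m n (X : 'M[R]_(m, n)) (Y : 'M[R]_n) i :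
  Y *m Y^T = 1%:M -> rsq (X *m Y) i = rsq X i.
Proof. by move=> hY; rewrite !rsqE trmx_mul mulmxA -(mulmxA X) hY mulmx1. Qed.

Lemma rsq_le_fsq m n (X : 'M[R]_(m, n)) i : rsq X i <= fsq X.
Proof.
rewrite /fsq (bigD1 i) //= lerDl; apply: sumr_ge0 => a _; apply: sumr_ge0 => j _; exact: sqr_ge0.
Qed.

Lemma orthoC n (U : 'M[R]_n) : U^T *m U = 1%:M -> U *m U^T = 1%:M.
Proof. exact: mulmx1C. Qed.

Lemma orth_mul n (X Y : 'M[R]_n) : X^T *m X = 1%:M -> Y^T *m Y = 1%:M ->
  (X *m Y)^T *m (X *m Y) = 1%:M.
Proof.
by move=> hX hY; rewrite trmx_mul mulmxA -(mulmxA Y^T) hX mulmx1 hY.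
Qed.

Lemma orth_tr n (X : 'M[R]_n) : X^T *m X = 1%:M -> X^T^T *m X^T = 1%:M.
Proof. by move=> hX; rewrite trmxK orthoC. Qed.

End Fsq.

Section Eig.
Variable R : rcfType.

Lemma sqr_gt0 (x : R) : x != 0 -> 0 < x ^+ 2.
Proof. by move=> h; rewrite exprn_even_gt0 // h orbT. Qed.

Lemma ReD (x y : R[i]) : complex.Re (x + y) = complex.Re x + complex.Re y. Proof. by case: x; case: y. Qed.
Lemma ImD (x y : R[i]) : complex.Im (x + y) = complex.Im x + complex.Im y. Proof. by case: x; case: y. Qed.
Lemma Re0 : complex.Re (0 : R[i]) = 0. Proof. by []. Qed.
Lemma Im0 : complex.Im (0 : R[i]) = 0. Proof. by []. Qed.
Lemma ReMr (x : R[i]) (c : R) : complex.Re (x * (c%:C)%C) = complex.Re x * c.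
Proof. by case: x => a b /=; rewrite mulr0 subr0. Qed.
Lemma ImMr (x : R[i]) (c : R) : complex.Im (x * (c%:C)%C) = complex.Im x * c.
Proof. by case: x => a b /=; rewrite mulr0 add0r. Qed.
Lemma ReM (x y : R[i]) : complex.Re (x * y) = complex.Re x * complex.Re y - complex.Im x * complex.Im y.
Proof. by case: x; case: y. Qed.
Lemma ImM (x y : R[i]) : complex.Im (x * y) = complex.Re x * complex.Im y + complex.Im x * complex.Re y.
Proof. by case: x; case: y. Qed.

Lemma entD m n (A B : 'M[R]_(m, n)) i j : (A + B) i j = A i j + B i j.
Proof. by rewrite mxE. Qed.
Lemma entN m n (A : 'M[R]_(m, n)) i j : (- A) i j = - A i j.
Proof. by rewrite mxE. Qed.
Lemma entZ m n c (A : 'M[R]_(m, n)) i j : (c *: A) i j = c * A i j.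
Proof. by rewrite mxE. Qed.
Lemma dotE n (u w : 'rV[R]_n) : (u *m w^T) 0 0 = \sum_j u 0 j * w 0 j.
Proof. by rewrite mxE; apply: eq_bigr => j _; rewrite mxE. Qed.

Lemma real_eigvec n (A : 'M[R]_n.+1) : A^T = A ->
  exists l, exists2 v : 'rV[R]_n.+1, v != 0 & v *m A = l *: v.
Proof.
move=> hA.
pose AC := map_mx (fun x : R => (x%:C)%C) A.
have : size (char_poly AC) != 1 by rewrite size_char_poly.
case/closed_rootP => a; rewrite -eigenvalue_root_char => /eigenvalueP [v hv vn0].
pose x := \row_j complex.Re (v 0 j); pose y := \row_j complex.Im (v 0 j).
have hxy : forall j, \sum_i v 0 i * AC i j = a * v 0 j.
  by move=> j; move/rowP: hv => /(_ j); rewrite !mxE.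
have hx : x *m A = complex.Re a *: x - complex.Im a *: y.
  apply/rowP => j; have := congr1 (@complex.Re R) (hxy j).
  rewrite (big_morph (@complex.Re R) ReD Re0) ReM !mxE => <-.
  by apply: eq_bigr => i _; rewrite !mxE ReMr.
have hy : y *m A = complex.Im a *: x + complex.Re a *: y.
  apply/rowP => j; have := congr1 (@complex.Im R) (hxy j).
  rewrite (big_morph (@complex.Im R) ImD Im0) ImM => h.
  rewrite !mxE addrC -h.
  by apply: eq_bigr => i _; rewrite !mxE ImMr.
have sym : (x *m A *m y^T) 0 0 = (y *m A *m x^T) 0 0.
  have -> : y *m A *m x^T = (x *m A *m y^T)^T by rewrite !trmx_mul trmxK hA mulmxA.
  by rewrite [in RHS]mxE.
rewrite hx hy !mulmxDl !mulNmx -!scalemxAl !entD !entN !entZ !dotE in sym.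
have xyC : \sum_j y 0 j * x 0 j = \sum_j x 0 j * y 0 j.
  by apply: eq_bigr => j _; rewrite mulrC.
rewrite xyC in sym.
have [j vj] : exists j, v 0 j != 0.
  case: (pickP (fun j => v 0 j != 0)) => [j hj|h]; first by exists j.
  by case/negP: vn0; apply/eqP/rowP => j; have := h j; rewrite mxE => /negbFE/eqP.
have xxpos : 0 < \sum_j x 0 j * x 0 j + \sum_j y 0 j * y 0 j.
  have ge : forall z : 'rV[R]_n.+1, z 0 j ^+ 2 <= \sum_i z 0 i * z 0 i.
    move=> z; rewrite (bigD1 j) //= -expr2 lerDl.
    by apply: sumr_ge0 => i _; rewrite -expr2 sqr_ge0.
  have : 0 < x 0 j ^+ 2 + y 0 j ^+ 2.
    move: vj; rewrite !mxE; case: (v 0 j) => p q /= hpq.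
    have : (p != 0) || (q != 0).
      by apply: contraR hpq; rewrite negb_or !negbK => /andP[/eqP-> /eqP->].
    case/orP => h; [have := sqr_gt0 h; have := sqr_ge0 q | have := sqr_gt0 h; have := sqr_ge0 p]; lra.
  have := ge x; have := ge y; lra.
have Ima0 : complex.Im a = 0.
  have : complex.Im a * (\sum_j x 0 j * x 0 j + \sum_j y 0 j * y 0 j) = 0.
    rewrite mulrDr; lra.
  by move/eqP; rewrite mulf_eq0 (gt_eqF xxpos) orbF => /eqP.
rewrite Ima0 scale0r subr0 in hx; rewrite Ima0 scale0r add0r in hy.
have [x0|xn0] := eqVneq x 0.
  exists (complex.Re a); exists y => //; apply: contra_neq vj => y0.
  move/rowP: x0 => /(_ j); move/rowP: y0 => /(_ j); rewrite !mxE.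
  by case: (v 0 j) => p q /= -> ->.
by exists (complex.Re a); exists x.
Qed.

End Eig.

Section Svd.
Variable R : rcfType.

Lemma dotE' n (u w : 'rV[R]_n) : (u *m w^T) 0 0 = \sum_j u 0 j ^+ 2 -> True. Proof. by []. Qed.

Lemma nrm_ge0 n (v : 'rV[R]_n) : 0 <= (v *m v^T) 0 0.
Proof. rewrite mxE; apply: sumr_ge0 => j _; rewrite mxE -expr2 sqr_ge0 //. Qed.

Lemma nrm_eq0 n (v : 'rV[R]_n) : (v *m v^T) 0 0 = 0 -> v = 0.
Proof.
rewrite mxE => h; apply/rowP => j; rewrite mxE.
have hge : forall i : 'I_n, true -> 0 <= v 0 i * v^T i 0.
  by move=> i _; rewrite mxE -expr2 sqr_ge0.
have := @psumr_eq0P _ _ _ _ hge h j isT; rewrite mxE -expr2 => /eqP.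
by rewrite sqrf_eq0 => /eqP.
Qed.

Lemma nrm_gt0 n (v : 'rV[R]_n) : v != 0 -> 0 < (v *m v^T) 0 0.
Proof.
move=> vn0; rewrite lt_def nrm_ge0 andbT; apply/eqP => /nrm_eq0 h.
by rewrite h eqxx in vn0.
Qed.

Lemma normalize n (v : 'rV[R]_n) : v != 0 ->
  exists2 c : R, 0 < c & (c *: v) *m (c *: v)^T = 1%:M.
Proof.
move=> vn0; have p := nrm_gt0 vn0.
exists (Num.sqrt ((v *m v^T) 0 0))^-1; first by rewrite invr_gt0 sqrtr_gt0.
rewrite linearZ /= -scalemxAl -scalemxAr scalerA.
apply/matrixP => i j; rewrite (ord1 i) (ord1 j) [RHS]mxE eqxx /=.
rewrite [LHS]mxE -expr2 exprVn sqr_sqrtr ?(ltW p) // mulVf // gt_eqF //.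
Qed.

Lemma unit_neq0 n (w : 'rV[R]_n.+1) : w *m w^T = 1%:M -> w != 0.
Proof.
move=> hw; apply/eqP => w0; move: hw; rewrite w0 mul0mx => /matrixP /(_ 0 0).
by rewrite !mxE eqxx => /eqP; rewrite eq_sym oner_eq0.
Qed.

Lemma sv_pair n (A : 'M[R]_n.+1) : exists t : R, exists w z : 'rV[R]_n.+1,
  [/\ 0 <= t, w *m w^T = 1%:M, z *m z^T = 1%:M, w *m A = t *: z & z *m A^T = t *: w].
Proof.
have hs : (A *m A^T)^T = A *m A^T by rewrite trmx_mul trmxK.
case: (real_eigvec hs) => l [v vn0 hv].
case: (normalize vn0) => c cpos hw; set w := c *: v in hw.
have hwA : w *m (A *m A^T) = l *: w.
  by rewrite /w -scalemxAl hv !scalerA mulrC.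
have [w0|wn0] := eqVneq (w *m A) 0.
  have : \det A == 0 by apply/det0P; exists w => //; exact: unit_neq0.
  rewrite -det_tr => /det0P [z0 z0n0 hz0].
  case: (normalize z0n0) => c' c'pos hz.
  exists 0, w, (c' *: z0); split => //.
    by rewrite w0 scale0r.
  by rewrite -scalemxAl hz0 !scaler0 scale0r.
case: (normalize wn0) => c2 c2pos hz.
have l1 : c2 ^+ 2 * l = 1.
  move: hz; rewrite linearZ /= -scalemxAl -scalemxAr scalerA trmx_mul mulmxA.
  rewrite -(mulmxA w) hwA -scalemxAl hw => /matrixP /(_ 0 0).
  by rewrite !mxE eqxx mulr1 -expr2.
exists c2^-1, w, (c2 *: (w *m A)); split => //.
- by rewrite invr_ge0 ltW.
- by rewrite scalerA mulVf ?scale1r // gt_eqF.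
- rewrite -scalemxAl -mulmxA hwA scalerA; congr (_ *: _).
  have -> : c2^-1 = c2^-1 * (c2 ^+ 2 * l) by rewrite l1 mulr1.
  by rewrite expr2 !mulrA mulVf ?mul1r // gt_eqF.
Qed.

Lemma householder n (u : 'rV[R]_n.+1) : u *m u^T = 1%:M ->
  exists H : 'M[R]_n.+1, H^T *m H = 1%:M /\ 'e_0 *m H = u.
Proof.
move=> hu; set e : 'rV[R]_n.+1 := 'e_0.
have ee : e *m e^T = 1%:M.
  by rewrite /e trmx_delta mul_delta_mx; apply/matrixP => i j; rewrite !ord1 !mxE.
set w : 'rV[R]_n.+1 := e - u; set c : R := (w *m w^T) 0 0.
have [c0|cn0] := eqVneq c 0.
  exists (1%:M); split; first by rewrite trmx1 mulmx1.
  by move/nrm_eq0: c0 => /eqP; rewrite subr_eq0 mulmx1 => /eqP.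
set g : R := (e *m u^T) 0 0.
have ue : (u *m e^T) 0 0 = g by rewrite /g -[u *m e^T]trmxK trmx_mul trmxK [LHS]mxE.
have cE : c = 2 - 2 * g.
  rewrite /c /w linearB /= mulmxBl !mulmxBr !entD !entN ee hu !entD !entN ue -/g !mxE eqxx /=; lra.
set d : R := (e *m w^T) 0 0.
have dE : d = 1 - g by rewrite /d /w linearB /= mulmxBr entD entN ee -/g mxE eqxx.
set a := 2 / c.
have g1 : 1 - g != 0 by apply: contra_neq cn0; rewrite cE => h; lra.
have ad : a * d = 1.
  rewrite /a dE cE; have -> : 2 - 2 * g = 2 * (1 - g) by ring.
  by field; exact: g1.
have ac : a * c = 2 by rewrite /a mulrAC -mulrA mulfV // mulr1.
set X := w^T *m w.
have XX : X *m X = c *: X.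
  by rewrite /X -mulmxA (mulmxA w) (mx11_scalar (w *m w^T)) mul_scalar_mx -scalemxAr.
exists (1%:M - a *: X); split.
  have -> : (1%:M - a *: X)^T = 1%:M - a *: X.
    by rewrite linearB linearZ /= trmx1 /X trmx_mul trmxK.
  rewrite mulmxBl mul1mx mulmxBr mulmx1 -scalemxAl -scalemxAr XX !scalerA.
  by rewrite -mulrA ac mulr_natr mulr2n scalerDl opprB addrK subrK.
rewrite mulmxBr mulmx1 -scalemxAr /X mulmxA (mx11_scalar (e *m w^T)) -/d mul_scalar_mx scalerA ad scale1r.
by rewrite /w opprB addrC subrK.
Qed.


Lemma blk_mul n (t : R) (W D Z : 'M[R]_n) :
  (block_mx (1%:M : 'M_1) 0 0 W *m (block_mx t%:M 0 0 D *m (block_mx (1%:M : 'M_1) 0 0 Z)^T) : 'M_(1 + n))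
  = block_mx t%:M 0 0 (W *m (D *m Z^T)).
Proof.
rewrite tr_block_mx !trmx0 trmx1 !mulmx_block.
by rewrite !mulmx0 !mul0mx !mulmx1 !mul1mx !addr0 !add0r mulmx0.
Qed.

Lemma svd_ex n (A : 'M[R]_n) : exists (W Z : 'M[R]_n) (t : 'rV[R]_n),
  [/\ W^T *m W = 1%:M, Z^T *m Z = 1%:M, (forall i, 0 <= t 0 i)
     & A = W *m diag_mx t *m Z^T].
Proof.
elim: n A => [|n IH] A.
  exists 1%:M, 1%:M, 0; split; rewrite ?trmx1 ?mulmx1 //; first by case.
  by apply/matrixP => -[].
case: (sv_pair A) => t [w [z [t0 hw hz hwA hzA]]].
case: (householder hw) => H1 [o1 e1]; case: (householder hz) => H2 [o2 e2].
pose G : 'M[R]_(1 + n) := H1 *m A *m H2^T.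
have AG : A = H1^T *m G *m H2.
  by rewrite /G !mulmxA o1 mul1mx -mulmxA o2 mulmx1.
pose e0 : 'rV[R]_n.+1 := 'e_0.
have rowG : e0 *m G = t *: e0.
  by rewrite /G !mulmxA /e0 e1 hwA -scalemxAl -e2 -mulmxA (orthoC o2) mulmx1.
have Az : A *m z^T = t *: w^T by rewrite -[A]trmxK -trmx_mul hzA linearZ.
have colG : G *m e0^T = t *: e0^T.
  rewrite /G -!mulmxA -trmx_mul /e0 e2 Az -scalemxAr -e1 trmx_mul mulmxA (orthoC o1) mul1mx //.
have G0j : forall j, G 0 j = t * (j == 0)%:R.
  move=> j; move/rowP: rowG => /(_ j); rewrite /e0 -rowE !mxE eqxx //.
have Gi0 : forall i, G i 0 = t * (i == 0)%:R.
  move=> i; move/colP: colG => /(_ i); rewrite /e0 trmx_delta -colE !mxE eqxx andbT //.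
clearbody G.
have GB : G = block_mx (t%:M) 0 0 (drsubmx G).
  rewrite -[G in LHS]submxK; congr block_mx; apply/matrixP => i j; rewrite !mxE.
  - have -> : lshift n i = 0 by apply: val_inj; rewrite /= (ord1 i).
    have -> : lshift n j = 0 by apply: val_inj; rewrite /= (ord1 j).
    by rewrite G0j (ord1 i) (ord1 j) eqxx mulr1.
  - have -> : lshift n i = 0 by apply: val_inj; rewrite /= (ord1 i).
    by rewrite G0j; have -> : (rshift 1 j == 0) = false by []; rewrite mulr0.
  - have -> : lshift n j = 0 by apply: val_inj; rewrite /= (ord1 j).
    by rewrite Gi0; have -> : (rshift 1 i == 0) = false by []; rewrite mulr0.
case: (IH (drsubmx G)) => W' [Z' [t' [oW oZ tpos eG']]].
have oB : forall Y : 'M[R]_n, Y^T *m Y = 1%:M ->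
    (block_mx (1%:M : 'M_1) 0 0 Y)^T *m block_mx (1%:M : 'M_1) 0 0 Y = 1%:M.
  move=> Y hY; rewrite tr_block_mx !trmx0 trmx1 mulmx_block hY.
  by rewrite !mulmx0 !mul0mx !addr0 !add0r mulmx1 -scalar_mx_block.
exists (H1^T *m block_mx (1%:M : 'M_1) 0 0 W'), (H2^T *m block_mx (1%:M : 'M_1) 0 0 Z'),
  (row_mx (t%:M : 'rV_1) t'); split.
- by apply: orth_mul; [apply: orth_tr | apply: oB].
- by apply: orth_mul; [apply: orth_tr | apply: oB].
- move=> i; rewrite mxE; case: splitP => j _; last exact: tpos.
  by rewrite (ord1 j) mxE eqxx mulr1n.
rewrite {1}AG GB eG' (diag_mx_row (t%:M : 'rV_1) t') trmx_mul trmxK !mulmxA; congr (_ *m _).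
rewrite -!mulmxA; congr (_ *m _).
have -> : diag_mx (t%:M : 'rV_1) = t%:M.
  by apply/matrixP => i j; rewrite (ord1 i) (ord1 j) !mxE.
by rewrite blk_mul.
Qed.


End Svd.

Section Pert.
Variable R : rcfType.

Lemma key_scalar (s y a b r q d : R) : 0 <= s -> 0 <= y -> 0 <= d -> d <= `|s - y| ->
  s * b + r = a * y -> s * a + q = b * y -> d ^+ 2 * (a ^+ 2 + b ^+ 2) <= r ^+ 2 + q ^+ 2.
Proof.
move=> hs hy hd hdn e1 e2.
have f1 : (s - y) * (a + b) = - (r + q) by lra.
have f2 : (s + y) * (a - b) = r - q by lra.
have d1 : d ^+ 2 <= (s - y) ^+ 2.
  by rewrite -[(s - y) ^+ 2](real_normK (num_real _)) lerXn2r ?nnegrE ?normr_ge0.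
have d2 : (s - y) ^+ 2 <= (s + y) ^+ 2 by nra.
have g1 : d ^+ 2 * (a + b) ^+ 2 <= (r + q) ^+ 2.
  by rewrite -[(r + q) ^+ 2]sqrrN -f1 exprMn ler_wpM2r // sqr_ge0.
have g2 : d ^+ 2 * (a - b) ^+ 2 <= (r - q) ^+ 2.
  by rewrite -f2 exprMn ler_wpM2r ?sqr_ge0 // (le_trans d1 d2).
nra.
Qed.

Lemma le_sqrt_of_sq (m X : R) : 0 <= m -> m ^+ 2 <= X -> m <= Num.sqrt X.
Proof.
move=> hm hX; rewrite -[m](ger0_norm hm) -sqrtr_sqr; exact: ler_wsqrtr.
Qed.

Lemma row_match k (s t : 'rV[R]_k) (E P Q : 'M[R]_k) :
  (forall i, 0 <= s 0 i) -> (forall j, 0 <= t 0 j) ->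
  P *m P^T = 1%:M -> Q *m Q^T = 1%:M ->
  (forall i j, s 0 i * Q i j + (E *m Q) i j = P i j * t 0 j) ->
  (forall i j, s 0 i * P i j + (E^T *m P) i j = Q i j * t 0 j) ->
  forall i, exists j, `|s 0 i - t 0 j| <= Num.sqrt (fsq E).
Proof.
move=> hs ht oP oQ eQ eP i.
case: (@arg_minP _ _ _ i xpredT (fun j => `|s 0 i - t 0 j|) isT) => j0 _ hmin.
exists j0; set m := `|s 0 i - t 0 j0|.
have hj : forall j, m ^+ 2 * (P i j ^+ 2 + Q i j ^+ 2) <= (E *m Q) i j ^+ 2 + (E^T *m P) i j ^+ 2.
  by move=> j; apply: key_scalar (hs i) (ht j) (normr_ge0 _) (hmin j isT) (eQ i j) (eP i j).
have hsum : m ^+ 2 * (rsq P i + rsq Q i) <= rsq (E *m Q) i + rsq (E^T *m P) i.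
  rewrite /rsq -big_split mulr_sumr -big_split /=; apply: ler_sum => j _; exact: hj.
rewrite !rsq_mulR // in hsum.
have r1 : rsq P i = 1 by rewrite rsqE oP mxE eqxx.
have r2 : rsq Q i = 1 by rewrite rsqE oQ mxE eqxx.
have h1 := rsq_le_fsq E i; have h2 := rsq_le_fsq E^T i; rewrite fsq_trmx in h2.
apply: le_sqrt_of_sq; first exact: normr_ge0.
rewrite r1 r2 in hsum; lra.
Qed.

Lemma col_bound k (s t : 'rV[R]_k) (E P Q : 'M[R]_k) (d : R) :
  (forall i, 0 <= s 0 i) -> (forall j, 0 <= t 0 j) -> 0 <= d ->
  P^T *m P = 1%:M -> P *m P^T = 1%:M -> Q *m Q^T = 1%:M ->
  (forall j, 0 <= P j j) ->
  (forall i j, i != j -> d <= `|s 0 i - t 0 j|) ->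
  (forall i j, s 0 i * Q i j + (E *m Q) i j = P i j * t 0 j) ->
  (forall i j, s 0 i * P i j + (E^T *m P) i j = Q i j * t 0 j) ->
  d ^+ 2 * fsq (1%:M - P) <= 4 * fsq E.
Proof.
move=> hs ht hd oP oP' oQ Pdiag hgap eQ eP.
pose OffP := \sum_j \sum_(i | i != j) P i j ^+ 2.
pose OffQ := \sum_j \sum_(i | i != j) Q i j ^+ 2.
have stepA : fsq (1%:M - P) <= 2 * OffP.
  rewrite /fsq exchange_big /OffP mulr_sumr; apply: ler_sum => j _.
  have cn : \sum_i P i j ^+ 2 = 1.
    move/matrixP: oP => /(_ j j); rewrite !mxE eqxx mulr1n => <-.
    by apply: eq_bigr => i _; rewrite mxE expr2.
  rewrite (bigD1 j) //= in cn; rewrite (bigD1 j) //=.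
  have -> : \sum_(i | i != j) (1%:M - P) i j ^+ 2 = \sum_(i | i != j) P i j ^+ 2.
    by apply: eq_bigr => i hij; rewrite !mxE (negbTE hij) mulr0n sub0r sqrrN.
  rewrite !mxE eqxx mulr1n.
  have := Pdiag j; have : 0 <= \sum_(i | i != j) P i j ^+ 2 by apply: sumr_ge0 => i _; exact: sqr_ge0.
  move: cn; set O := \sum_(i | i != j) _; set p := P j j => cn O0 p0; nra.
have OQ0 : 0 <= OffQ by apply: sumr_ge0 => j _; apply: sumr_ge0 => i _; exact: sqr_ge0.
have stepB : d ^+ 2 * (OffP + OffQ) <= 2 * fsq E.
  have -> : 2 * fsq E = fsq (E *m Q) + fsq (E^T *m P).
    by rewrite !fsq_mulR // fsq_trmx; ring.
  rewrite /OffP /OffQ -big_split mulr_sumr /fsq exchange_big [X in _ <= _ + X]exchange_big -big_split /=.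
  apply: ler_sum => j _; rewrite -big_split /= mulr_sumr.
  apply: le_trans (_ : _ <= \sum_(i | i != j) ((E *m Q) i j ^+ 2 + (E^T *m P) i j ^+ 2)) _.
    by apply: ler_sum => i hij; exact: key_scalar (hs i) (ht j) hd (hgap i j hij) (eQ i j) (eP i j).
  rewrite -big_split /= [X in _ <= X](bigD1 j) //= -subr_ge0 addrK.
  by apply: addr_ge0; exact: sqr_ge0.
have d2 : 0 <= d ^+ 2 by exact: sqr_ge0.
have := ler_wpM2l d2 stepA.
have : d ^+ 2 * OffQ >= 0 by apply: mulr_ge0.
rewrite mulrDr in stepB; lra.
Qed.

Lemma gap_max_ge0 k (s : 'rV[R]_k) : 0 <= gap_max s.
Proof.
rewrite /gap_max; apply: (big_ind (fun x => 0 <= x)) => //.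
  by move=> x y hx hy; rewrite le_max hx.
move=> i _; apply: (big_ind (fun x => 0 <= x)) => //.
by move=> x y hx hy; rewrite le_max hx.
Qed.

Lemma alpha_ge0 k (s : 'rV[R]_k) : 0 <= alpha s.
Proof.
have g := gap_max_ge0 s.
rewrite /alpha; apply: (big_ind (fun x => 0 <= x)) => //.
  by move=> x y hx hy; rewrite le_min hx.
move=> i _; apply: (big_ind (fun x => 0 <= x)) => //.
by move=> x y hx hy; rewrite le_min hx.
Qed.

Lemma alpha_le k (s : 'rV[R]_k) i j : i != j -> alpha s <= `|s 0 i - s 0 j|.
Proof.
move=> hij; rewrite /alpha; apply: le_trans (bigmin_le _ i _) _.
exact: bigmin_le_cond.
Qed.

Lemma alpha_small k (s : 'rV[R]_k) : (k <= 1)%N -> alpha s = 0.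
Proof.
case: k s => [|[|k]] s // _.
  by rewrite /alpha /gap_max !big_ord0.
rewrite /alpha (eq_bigr (fun _ => gap_max s)); last first.
  by move=> i _; rewrite big_pred0 // => j; rewrite (ord1 i) (ord1 j) eqxx.
rewrite /gap_max !big_ord_recl !big_ord0 subrr normr0 !maxxx minxx //.
Qed.

Definition pmx k (phi : 'I_k -> 'I_k) (g : 'I_k -> R) : 'M[R]_k :=
  \matrix_(a, b) (g b * (a == phi b)%:R).

Lemma mul_pmx m k (X : 'M[R]_(m, k)) phi g i b : (X *m pmx phi g) i b = g b * X i (phi b).
Proof.
rewrite mxE (bigD1 (phi b)) //= big1 => [|a hab]; last by rewrite mxE (negbTE hab) mulr0 mulr0.
by rewrite mxE eqxx mulr1 addr0 mulrC.
Qed.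

Lemma pmx_orth k (phi : 'I_k -> 'I_k) (g : 'I_k -> R) : injective phi ->
  (forall b, g b ^+ 2 = 1) -> (pmx phi g)^T *m pmx phi g = 1%:M.
Proof.
move=> inj g2; apply/matrixP => b c; rewrite mul_pmx !mxE (inj_eq inj).
have [->|hbc] := eqVneq b c; first by rewrite mulr1 -expr2 g2.
by rewrite !mulr0.
Qed.

Lemma diag_pmx k (phi : 'I_k -> 'I_k) (g : 'I_k -> R) (t : 'rV[R]_k) :
  diag_mx t *m pmx phi g = pmx phi g *m diag_mx (\row_b t 0 (phi b)).
Proof.
rewrite mul_diag_mx mul_mx_diag; apply/matrixP => a b; rewrite !mxE.
have [->|hab] := eqVneq a (phi b); first by rewrite mulr1 mulrC.
by rewrite !mulr0 mul0r.
Qed.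

Lemma entry_le_fsq m n (X : 'M[R]_(m, n)) i j : X i j ^+ 2 <= fsq X.
Proof.
apply: le_trans (rsq_le_fsq X i); rewrite /rsq (bigD1 j) //= lerDl.
by apply: sumr_ge0 => a _; exact: sqr_ge0.
Qed.

Lemma ent_eqs k (s t : 'rV[R]_k) (E P Q : 'M[R]_k) :
  (diag_mx s + E) *m Q = P *m diag_mx t ->
  forall i j, s 0 i * Q i j + (E *m Q) i j = P i j * t 0 j.
Proof.
move=> h i j; move/matrixP: h => /(_ i j).
have h1 : (diag_mx s *m Q) i j = s 0 i * Q i j by rewrite mul_diag_mx mxE.
have h2 : (P *m diag_mx t) i j = P i j * t 0 j by rewrite mul_mx_diag mxE.
by rewrite mulmxDl entD h1 h2.
Qed.

Lemma near_gap (x y z e : R) : `|x - z| <= e -> `|x - y| <= `|y - z| + e.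
Proof. move=> h; have := ler_distD z x y; rewrite [`|z - y|]distrC; lra. Qed.

End Pert.

Theorem corollaryC1 (R : rcfType) (k : nat) (B DB U V : 'M[R]_k)
  (s : 'rV[R]_k) (eps : R) :
  is_svd B U s V ->
  (forall i j : 'I_k, (i < j)%N -> s 0 j < s 0 i) ->
  (forall i : 'I_k, 0 < s 0 i) ->
  0 < eps ->
  frob DB < eps ->
  eps <= alpha s ^+ 2 /
         (Num.sqrt 2 *
          (2 * frob B * (1 + Num.sqrt (1 - k%:R^-1)) +
           Num.sqrt (alpha s ^+ 2 +
                     4 * frob B ^+ 2 * (1 + Num.sqrt (1 - k%:R^-1)) ^+ 2))) ->
  exists (Ut Vt : 'M[R]_k) (st : 'rV[R]_k),
    [/\ is_svd (B + DB) Ut st Vt,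
        (forall i j : 'I_k, (i <= j)%N -> st 0 j <= st 0 i)
      & frob (U - Ut) <= 2 * Num.sqrt 2 * eps / alpha s].
Proof.
move=> [oU oV s0 hB] sdec spos epos hDB heps.
have a0 := alpha_ge0 s.
have apos : 0 < alpha s.
  rewrite lt_def a0 andbT; apply/eqP => a00.
  by move: heps; rewrite a00 expr2 mul0r mul0r; lra.
have k2 : (1 < k)%N.
  by rewrite ltnNge; apply/negP => hk; rewrite alpha_small // ltxx in apos.
have agap := @alpha_le R k s.
pose i0 : 'I_k := Ordinal (ltnW k2); pose i1 : 'I_k := Ordinal k2.
have s0ge : alpha s <= s 0 i0.
  have := agap i0 i1 isT; rewrite ger0_norm; last first.
    by rewrite subr_ge0 ltW // sdec.
  by have := spos i1; lra.
have fsqB : fsq B = fsq (diag_mx s).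
  by rewrite hB fsq_mulR ?fsq_mulL // trmxK.
have Fge : alpha s <= frob B.
  rewrite frobE fsqB; apply: le_sqrt_of_sq => //.
  apply: le_trans (entry_le_fsq _ i0 i0); rewrite mxE eqxx mulr1n.
  by rewrite lerXn2r // ?nnegrE // ltW.
have e4 : 4 * eps <= alpha s.
  move: heps; set c := 1 + Num.sqrt _; move: Fge; set F := frob B => Fge.
  set S := Num.sqrt (alpha s ^+ 2 + _) => heps.
  have c1 : 1 <= c by rewrite /c lerDl sqrtr_ge0.
  have F0 : 0 <= F by lra.
  have SF : 2 * F * c <= S.
    apply: le_sqrt_of_sq; first by apply: mulr_ge0 => //; lra.
    have := sqr_ge0 (alpha s); rewrite !exprMn; lra.
  have sq2 : 1 <= Num.sqrt (2 : R) by apply: le_sqrt_of_sq; rewrite ?expr1n; lra.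
  have FC : alpha s <= F * c by nra.
  set D := Num.sqrt 2 * _ in heps.
  have D4 : 4 * alpha s <= D by rewrite /D; nra.
  rewrite ler_pdivlMr in heps; last by lra.
  nra.
case: (svd_ex (B + DB)) => W [Z [t [oW oZ t0 hBt]]].
pose E := U^T *m DB *m V.
have fsqE : fsq E = fsq DB.
  by rewrite /E fsq_mulR ?fsq_mulL ?trmxK ?orthoC.
pose e := Num.sqrt (fsq E).
have ee : e < eps by rewrite /e fsqE -frobE.
have e0 : 0 <= e := sqrtr_ge0 _.
pose P := U^T *m W; pose Q := V^T *m Z.
have oP : P^T *m P = 1%:M by apply: orth_mul => //; apply: orth_tr.
have oQ : Q^T *m Q = 1%:M by apply: orth_mul => //; apply: orth_tr.
have oP' := orthoC oP; have oQ' := orthoC oQ.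
have PE : P = U^T *m W by []. have QE : Q = V^T *m Z by [].
clearbody P Q.
have hM : diag_mx s + E = P *m diag_mx t *m Q^T.
  have <- : U^T *m (B + DB) *m V = diag_mx s + E.
    rewrite mulmxDr mulmxDl hB !mulmxA oU mul1mx -mulmxA oV mulmx1 //.
  by rewrite hBt PE QE trmx_mul trmxK !mulmxA.
have eqQ' : (diag_mx s + E) *m Q = P *m diag_mx t.
  by rewrite hM -mulmxA oQ mulmx1.
have eqP' : (diag_mx s + E^T) *m P = Q *m diag_mx t.
  have <- : (diag_mx s + E)^T = diag_mx s + E^T by rewrite linearD /= tr_diag_mx.
  by rewrite hM !trmx_mul trmxK tr_diag_mx -!mulmxA oP mulmx1.
have hm : forall i, exists j, `|s 0 i - t 0 j| <= e :=
  row_match s0 t0 oP' oQ' (ent_eqs eqQ') (ent_eqs eqP').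
case: (fin_all_exists hm) => phi hphi.
have fe : fsq E = e ^+ 2 by rewrite sqr_sqrtr ?fsq_ge0.
clearbody E e.
have phi_inj : injective phi.
  move=> i i' h; apply/eqP; apply: contraT => hne.
  have h1 := hphi i; rewrite h in h1.
  have := near_gap (s 0 i') h1; have := hphi i'; have := agap i i' hne; lra.
pose g : 'I_k -> R := fun b => if 0 <= P b (phi b) then 1 else -1.
have g2 : forall b, g b ^+ 2 = 1.
  by move=> b; rewrite /g; case: ifP => _; rewrite ?sqrrN expr1n.
pose Pi := pmx phi g.
have oPi : Pi^T *m Pi = 1%:M := pmx_orth phi_inj g2.
have oPi' := orthoC oPi.
pose t' : 'rV[R]_k := \row_b t 0 (phi b).
have dPi : diag_mx t *m Pi = Pi *m diag_mx t' := diag_pmx phi g t.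
exists (W *m Pi), (Z *m Pi), t'; split.
- split.
  + exact: orth_mul.
  + exact: orth_mul.
  + by move=> i; rewrite mxE.
  have -> : W *m Pi *m diag_mx t' = W *m diag_mx t *m Pi by rewrite -mulmxA -dPi mulmxA.
  by rewrite hBt trmx_mul mulmxA -(mulmxA (W *m diag_mx t) Pi) oPi' mulmx1.
- move=> i j; rewrite leq_eqVlt => /orP [/eqP/val_inj -> //| hij].
  rewrite !mxE.
  have hne : i != j by rewrite -val_eqE /= neq_ltn hij.
  have := hphi i; have := hphi j; have := agap i j hne.
  rewrite (ger0_norm (ltW _)); last by rewrite subr_gt0 sdec.
  rewrite !ler_norml => ha /andP[hj1 hj2] /andP[hi1 hi2]; lra.
pose P' := P *m Pi; pose Q' := Q *m Pi.
have UP : U - W *m Pi = U *m (1%:M - P').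
  by rewrite mulmxBr mulmx1 /P' PE !mulmxA (orthoC oU) mul1mx.
rewrite frobE UP fsq_mulL //.
have oP'1 : P'^T *m P' = 1%:M by apply: orth_mul.
have oP'2 := orthoC oP'1.
have oQ'2 : Q' *m Q'^T = 1%:M by apply: orthoC; apply: orth_mul.
have eQ2 : (diag_mx s + E) *m Q' = P' *m diag_mx t'.
  by rewrite /Q' mulmxA eqQ' -mulmxA dPi mulmxA.
have eP2 : (diag_mx s + E^T) *m P' = Q' *m diag_mx t'.
  by rewrite /P' mulmxA eqP' -mulmxA dPi mulmxA.
have Pd : forall j, 0 <= P' j j.
  move=> j; rewrite /P' mul_pmx /g; case: ifP => h; first by rewrite mul1r.
  by rewrite mulN1r oppr_ge0 ltW // ltNge h.
have gap : forall i j, i != j -> alpha s - e <= `|s 0 i - t' 0 j|.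
  move=> i j hij; rewrite mxE; have := near_gap (s 0 i) (hphi j).
  rewrite distrC; have := agap i j hij; lra.
have hd : 0 <= alpha s - e by lra.
have t'0 : forall j, 0 <= t' 0 j by move=> j; rewrite mxE.
have cb := col_bound s0 t'0 hd oP'1 oP'2 oQ'2 Pd gap (ent_eqs eQ2) (ent_eqs eP2).
rewrite fe in cb.
move: cb; set X := fsq (1%:M - P') => cb.
have X0 : 0 <= X := fsq_ge0 _.
set y := 2 * Num.sqrt 2 * eps / alpha s.
have y0 : 0 <= y by rewrite /y divr_ge0 ?mulr_ge0 ?sqrtr_ge0 // ltW.
have yy : y ^+ 2 * alpha s ^+ 2 = 8 * eps ^+ 2.
  rewrite /y expr_div_n !exprMn sqr_sqrtr; last by lra.
  by field; rewrite gt_eqF.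
rewrite -(ger0_norm y0) -sqrtr_sqr; apply: ler_wsqrtr.
have a2 : 0 < alpha s ^+ 2 by rewrite exprn_gt0.
suff : X * alpha s ^+ 2 <= y ^+ 2 * alpha s ^+ 2 by rewrite ler_pM2r.
rewrite yy.
have h1 : 9 * alpha s ^+ 2 <= 16 * (alpha s - e) ^+ 2 by nra.
have h2 : X * (9 * alpha s ^+ 2) <= X * (16 * (alpha s - e) ^+ 2) by rewrite ler_wpM2l.
have h3 : e ^+ 2 <= eps ^+ 2 by rewrite lerXn2r ?nnegrE // ?ltW //.
nra.
Qed.
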